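(* Let $G$ be a plane graph whose set of vertices has no accumulation point in $\mathbb{R}^2$ and which has bounded vertex degrees. If $G$ is hyperbolic, then the lengths of its geodetic cycles are bounded, i.e. $\sup\{|C| : C \text{ a geodetic cycle of } G\}<\infty$.
   Context: A plane graph is a graph with a fixed embedding in $\mathbb{R}^2$ with no two edges crossing. For a cycle $C$ and vertices $x,y$ on $C$, $xCy$ and $yCx$ denote the two arcs of $C$ joining $x$ and $y$. A geodetic cycle is a cycle $C$ such that for every two vertices $x,y\in C$ at least one of $xCy$, $yCx$ is a geodesic in $G$ (a path whose length equals the graph distance between its endpoints). A geodetic triangle consists of three vertices and three geodesics (sides) joining them pairwise; it is $\delta$-thin if each side lies in the $\delta$-neighbourhood of the union of the other two. A connected graph is $\delta$-hyperbolic if every geodetic triangle is $\delta$-thin; a graph is hyperbolic if there is $\delta\ge0$ such that each connected component is $\delta$-hyperbolic. *)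

(* Defs.v *)
From Stdlib Require Export Reals List Arith Lia.
Export ListNotations.
Set Implicit Arguments.

Open Scope R_scope.

Definition point := (R * R)%type.

Definition sqdist (p q : point) : R :=
  Rsqr (fst p - fst q) + Rsqr (snd p - snd q).

Definition simple_graph (V : Type) (adj : V -> V -> Prop) : Prop :=
  (forall u v, adj u v -> adj v u) /\ (forall v, ~ adj v v).

(* A plane graph: vertices are distinct points of R^2, each edge {u,v} is an arc
   (a continuous curve t |-> arc u v t, injective on [0,1], from pos u to pos v,
   and arc v u is the same arc traversed backwards); the interior of an arc
   contains no vertex, and interiors of arcs of distinct edges are disjoint. *)
Definition plane_graph (V : Type) (adj : V -> V -> Prop) (pos : V -> point)
    (arc : V -> V -> R -> point) : Prop :=
  simple_graph adj /\
  (forall u v, pos u = pos v -> u = v) /\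
  (forall u v, adj u v ->
     continuity (fun t => fst (arc u v t)) /\ continuity (fun t => snd (arc u v t))) /\
  (forall u v, adj u v -> arc u v 0 = pos u /\ arc u v 1 = pos v) /\
  (forall u v s t, adj u v -> 0 <= s <= 1 -> 0 <= t <= 1 ->
     arc u v s = arc u v t -> s = t) /\
  (forall u v t, adj u v -> arc v u t = arc u v (1 - t)) /\
  (forall u v w t, adj u v -> 0 < t < 1 -> arc u v t <> pos w) /\
  (forall u v u' v' s t, adj u v -> adj u' v' ->
     ~ ((u = u' /\ v = v') \/ (u = v' /\ v = u')) ->
     0 < s < 1 -> 0 < t < 1 -> arc u v s <> arc u' v' t).

(* the vertex set has no accumulation point in R^2: every point has a
   neighbourhood containing only finitely many vertices *)
Definition no_accumulation_point (V : Type) (pos : V -> point) : Prop :=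
  forall p : point, exists eps : R, 0 < eps /\
    exists l : list V, forall v, sqdist (pos v) p < eps -> In v l.

Definition bounded_degree (V : Type) (adj : V -> V -> Prop) : Prop :=
  exists D : nat, forall v, exists l : list V,
    (length l <= D)%nat /\ forall w, adj v w -> In w l.

Fixpoint walk (V : Type) (adj : V -> V -> Prop) (l : list V) : Prop :=
  match l with
  | x :: ((y :: _) as t) => adj x y /\ walk adj t
  | _ => True
  end.

(* l is a walk from x to y; its length (number of edges) is length l - 1 *)
Definition walk_from_to (V : Type) (adj : V -> V -> Prop) (x y : V) (l : list V) : Prop :=
  walk adj l /\ hd_error l = Some x /\ hd_error (rev l) = Some y.

Definition geodesic_between (V : Type) (adj : V -> V -> Prop) (x y : V) (p : list V) : Prop :=
  walk_from_to adj x y p /\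
  forall q, walk_from_to adj x y q -> (length p <= length q)%nat.

Definition geodesic (V : Type) (adj : V -> V -> Prop) (p : list V) : Prop :=
  exists x y, geodesic_between adj x y p.

(* d(v,w) <= delta *)
Definition within (V : Type) (adj : V -> V -> Prop) (delta : nat) (v w : V) : Prop :=
  exists q, walk_from_to adj v w q /\ (length q <= S delta)%nat.

Definition side_thin (V : Type) (adj : V -> V -> Prop) (delta : nat) (p q r : list V) : Prop :=
  forall v, In v p -> exists w, (In w q \/ In w r) /\ within adj delta v w.

(* every geodetic triangle (x,y,z; sides p,q,r) is delta-thin.  Since a geodetic
   triangle lies in one connected component, this says that every component is
   delta-hyperbolic for the same delta. *)
Definition hyperbolic (V : Type) (adj : V -> V -> Prop) : Prop :=
  exists delta : nat, forall (x y z : V) (p q r : list V),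
    geodesic_between adj x y p -> geodesic_between adj y z q ->
    geodesic_between adj z x r ->
    side_thin adj delta p q r /\ side_thin adj delta q r p /\ side_thin adj delta r p q.

(* a cycle is a list [c_0; ...; c_{n-1}] of n >= 3 distinct vertices with
   c_i ~ c_{i+1} and c_{n-1} ~ c_0 *)
Definition cycle (V : Type) (adj : V -> V -> Prop) (C : list V) : Prop :=
  (3 <= length C)%nat /\ NoDup C /\ walk adj C /\
  match C with c :: _ => adj (last C c) c | nil => False end.

(* the arc c_i C c_j : c_i, c_{i+1}, ..., c_j  (indices mod n) *)
Definition cyc_arc (V : Type) (C : list V) (i j : nat) : list V :=
  match C with
  | nil => nil
  | c :: _ =>
      map (fun k => nth ((i + k) mod length C) C c)
          (seq 0 (S ((j + length C - i) mod length C)))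
  end.

Definition geodetic_cycle (V : Type) (adj : V -> V -> Prop) (C : list V) : Prop :=
  cycle adj C /\
  forall i j, (i < length C)%nat -> (j < length C)%nat ->
    geodesic adj (cyc_arc C i j) \/ geodesic adj (cyc_arc C j i).

(* Main.v *)
Require Import Defs.
Open Scope nat_scope.

Lemma modcases a n : 0 < n -> a < 2 * n ->
  (a < n /\ a mod n = a) \/ (n <= a /\ a mod n = a - n).
Proof.
  intros Hn Ha. destruct (Nat.lt_ge_cases a n) as [H|H].
  - left. split; [exact H| apply Nat.mod_small; exact H].
  - right. split; [exact H|].
    replace a with ((a - n) + 1 * n) at 1 by lia.
    rewrite Nat.Div0.mod_add. apply Nat.mod_small. lia.
Qed.

Lemma Dval i j n : i < n -> j < n ->
  (i <= j /\ (j + n - i) mod n = j - i) \/ (j < i /\ (j + n - i) mod n = j + n - i).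
Proof.
  intros Hi Hj. destruct (modcases (j + n - i) n) as [[H1 H2]|[H1 H2]]; lia.
Qed.

Lemma walk_nth (V : Type) (adj : V -> V -> Prop) (d : V) (l : list V) :
  walk adj l <-> forall i, S i < length l -> adj (nth i l d) (nth (S i) l d).
Proof.
  induction l as [|a l IH]; simpl.
  - split; intros; [lia|exact I].
  - destruct l as [|b l'].
    + split; intros; [simpl in *; lia| exact I].
    + split.
      * intros [Hab Hw] i Hi. destruct i as [|i]; [exact Hab|].
        apply (proj1 IH Hw). simpl in *; lia.
      * intros H. split.
        -- apply (H 0). simpl; lia.
        -- apply IH. intros i Hi. apply (H (S i)). simpl in *; lia.
Qed.

Lemma walk_rev (V : Type) (adj : V -> V -> Prop) (l : list V) :
  (forall u v, adj u v -> adj v u) -> walk adj l -> walk adj (rev l).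
Proof.
  intros Hs Hw. destruct l as [|d l0]; [exact I|].
  set (l := d :: l0) in *.
  apply (walk_nth _ adj d). rewrite length_rev. intros i Hi.
  rewrite !rev_nth by lia. apply Hs.
  replace (length l - S i) with (S (length l - S (S i))) by lia.
  apply (proj1 (walk_nth _ adj d l) Hw). lia.
Qed.

Lemma last_nth' (V : Type) (l : list V) (d : V) :
  l <> nil -> last l d = nth (length l - 1) l d.
Proof.
  induction l as [|a l IH]; intros H; [congruence|].
  destruct l as [|b l']; [reflexivity|].
  change (last (a :: b :: l') d) with (last (b :: l') d).
  rewrite IH by discriminate. simpl. replace (length l' - 0) with (length l') by lia.
  destruct (length l'); reflexivity.
Qed.

Lemma map_nth' (A B : Type) (g : A -> B) (l : list A) (d : B) (d0 : A) s :
  s < length l -> nth s (map g l) d = g (nth s l d0).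
Proof.
  intros H. rewrite (nth_indep _ d (g d0)) by (rewrite length_map; exact H).
  apply map_nth.
Qed.

Section Main.
Variables (V : Type) (adj : V -> V -> Prop).
Hypothesis Hsym : forall u v, adj u v -> adj v u.
Variables (c : V) (C : list V).
Hypothesis HC : geodetic_cycle adj C.
Hypothesis Hc : nth 0 C c = c.

Let n := length C.
Let f (k : nat) := nth (k mod n) C c.

Lemma n3 : 3 <= n.
Proof using All. destruct HC as [[H _] _]. exact H. Qed.

Lemma arcE i j : cyc_arc C i j = map (fun k => f (i + k)) (seq 0 (S ((j + n - i) mod n))).
Proof using All.
  pose proof n3 as H3. unfold cyc_arc, f, n in *. destruct C as [|c0 l].
  - exfalso. simpl in *. lia.
  - simpl in Hc. subst c0. reflexivity.
Qed.

Lemma adj_f a : adj (f a) (f (S a)).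
Proof using All.
  pose proof n3 as H3. pose proof Hc as Hc0.
  destruct HC as [[_ [_ [Hw Hl]]] _].
  unfold f. replace (S a) with (1 + a) by lia.
  rewrite <- (Nat.Div0.add_mod_idemp_r 1 a n).
  assert (Hr : a mod n < n) by (apply Nat.mod_upper_bound; lia).
  destruct (Nat.lt_ge_cases (1 + a mod n) n) as [Hlt|Hge].
  - rewrite (Nat.mod_small _ _ Hlt).
    apply (proj1 (walk_nth _ adj c C) Hw). fold n. lia.
  - replace (1 + a mod n) with (0 + 1 * n) by lia.
    rewrite Nat.Div0.mod_add, Nat.Div0.mod_0_l.
    unfold n in *. revert Hl Hc0. destruct C as [|c0 l]; [intros []|].
    intros Hl Hc0. simpl in Hc0. subst c0. simpl nth at 2.
    rewrite last_nth' in Hl by discriminate.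
    replace (a mod length (c :: l)) with (length (c :: l) - 1) by lia.
    exact Hl.
Qed.

Lemma arc_wft i j : i < n -> j < n ->
  walk_from_to adj (nth i C c) (nth j C c) (cyc_arc C i j).
Proof using All.
  intros Hi Hj. pose proof n3 as H3. rewrite arcE. split; [|split].
  - apply (walk_nth _ adj (f 0)). rewrite length_map, length_seq. intros s Hs.
    rewrite !(map_nth' _ _ _ _ _ 0) by (rewrite length_seq; lia). rewrite !seq_nth by lia. simpl.
    replace (i + S s) with (S (i + s)) by lia. apply adj_f.
  - simpl. unfold f. rewrite Nat.add_0_r, Nat.mod_small; auto.
  - rewrite seq_S, map_app, rev_app_distr. simpl. unfold f.
    rewrite Nat.Div0.add_mod_idemp_r.
    replace (i + (j + n - i)) with (j + 1 * n) by lia.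
    rewrite Nat.Div0.mod_add, Nat.mod_small; auto.
Qed.

Lemma arc_len i j : length (cyc_arc C i j) = S ((j + n - i) mod n).
Proof using All. rewrite arcE, length_map, length_seq. reflexivity. Qed.

Lemma arc_in i j v : In v (cyc_arc C i j) ->
  exists s, s <= (j + n - i) mod n /\ v = f (i + s).
Proof using All.
  rewrite arcE, in_map_iff. intros [s [Hv Hs]]. apply in_seq in Hs.
  exists s. split; [lia| auto].
Qed.

Lemma lower i j q : i < n -> j < n ->
  walk_from_to adj (nth i C c) (nth j C c) q ->
  min (S ((j + n - i) mod n)) (S ((i + n - j) mod n)) <= length q.
Proof using All.
  intros Hi Hj Hq. destruct HC as [_ Hg].
  destruct (Hg i j Hi Hj) as [[x [y [[_ [Hx Hy]] Hmin]]]|[x [y [[_ [Hx Hy]] Hmin]]]].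
  - destruct (arc_wft i j Hi Hj) as [_ [Hx' Hy']].
    rewrite Hx' in Hx; rewrite Hy' in Hy. injection Hx as <-. injection Hy as <-.
    specialize (Hmin q Hq). rewrite arc_len in Hmin. lia.
  - destruct (arc_wft j i Hj Hi) as [_ [Hx' Hy']].
    rewrite Hx' in Hx; rewrite Hy' in Hy. injection Hx as <-. injection Hy as <-.
    destruct Hq as [Hw [H1 H2]].
    assert (Hr : walk_from_to adj (nth j C c) (nth i C c) (rev q)).
    { split; [apply walk_rev; auto|]. rewrite rev_involutive. auto. }
    specialize (Hmin _ Hr). rewrite arc_len, length_rev in Hmin. lia.
Qed.

Lemma geo i j : i < n -> j < n -> (j + n - i) mod n <= (i + n - j) mod n ->
  geodesic_between adj (nth i C c) (nth j C c) (cyc_arc C i j).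
Proof using All.
  intros Hi Hj Hle. split; [apply arc_wft; auto|].
  intros q Hq. rewrite arc_len. pose proof (lower i j q Hi Hj Hq). lia.
Qed.

End Main.

Theorem lemma3p1 (V : Type) (adj : V -> V -> Prop) (pos : V -> point)
    (arc : V -> V -> R -> point) :
  plane_graph adj pos arc ->
  no_accumulation_point pos ->
  bounded_degree adj ->
  hyperbolic adj ->
  exists N : nat, forall C : list V, geodetic_cycle adj C -> (length C <= N)%nat.
Proof.
  intros [[Hsym _] _] _ _ [delta Hd].
  exists (4 * delta + 3). intros C0 HC0.
  pose proof HC0 as HC'. destruct HC' as [[H3 _] _].
  destruct C0 as [|c l]; [simpl in H3; lia|].
  set (C := c :: l) in *.
  assert (Hc : nth 0 C c = c) by reflexivity.
  set (n := length C) in *.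
  destruct (Nat.le_gt_cases n (4 * delta + 3)) as [Hle|Hgt]; [exact Hle|exfalso].
  set (m := n / 2). set (k := m / 2).
  assert (Hm : 2 * m <= n <= 2 * m + 1).
  { pose proof (Nat.div_mod_eq n 2). pose proof (Nat.mod_upper_bound n 2). unfold m. lia. }
  assert (Hk : 2 * k <= m <= 2 * k + 1).
  { pose proof (Nat.div_mod_eq m 2). pose proof (Nat.mod_upper_bound m 2). unfold k. lia. }
  assert (Hkd : delta < k) by lia.
  assert (H0n : 0 < n) by lia.
  assert (Hmn : m < n) by lia.
  assert (Hnm : n - m < n) by lia.
  assert (Gp : geodesic_between adj (nth 0 C c) (nth m C c) (cyc_arc C 0 m)).
  { apply (geo V adj Hsym c C HC0 Hc); fold n; try lia.
    destruct (Dval 0 m n) as [[? ->]|[? ->]]; try lia;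
    destruct (Dval m 0 n) as [[? ->]|[? ->]]; lia. }
  assert (Gq : geodesic_between adj (nth m C c) (nth (n - m) C c) (cyc_arc C m (n - m))).
  { apply (geo V adj Hsym c C HC0 Hc); fold n; try lia.
    destruct (Dval m (n - m) n) as [[? ->]|[? ->]]; try lia;
    destruct (Dval (n - m) m n) as [[? ->]|[? ->]]; lia. }
  assert (Gr : geodesic_between adj (nth (n - m) C c) (nth 0 C c) (cyc_arc C (n - m) 0)).
  { apply (geo V adj Hsym c C HC0 Hc); fold n; try lia.
    destruct (Dval (n - m) 0 n) as [[? ->]|[? ->]]; try lia;
    destruct (Dval 0 (n - m) n) as [[? ->]|[? ->]]; lia. }
  destruct (Hd _ _ _ _ _ _ Gp Gq Gr) as [Thin _].
  assert (Hv : In (nth k C c) (cyc_arc C 0 m)).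
  { rewrite (arcE V adj Hsym c C HC0 Hc). apply in_map_iff. exists k. split.
    - cbv beta. rewrite Nat.add_0_l. fold n. rewrite Nat.mod_small by lia. reflexivity.
    - apply in_seq. fold n. destruct (Dval 0 m n) as [[? ->]|[? ->]]; lia. }
  destruct (Thin _ Hv) as [w [Hw [q [Hq Hql]]]].
  assert (Hwt : exists t, t < n /\ w = nth t C c /\ ((m <= t /\ k < t) \/ t = 0)).
  { destruct Hw as [Hw|Hw]; apply (arc_in V adj Hsym c C HC0 Hc) in Hw;
    destruct Hw as [s [Hs ->]]; fold n in Hs; fold n.
    - destruct (Dval m (n - m) n) as [[? E]|[? E]]; try lia. rewrite E in Hs.
      exists (m + s). rewrite Nat.mod_small by lia. repeat split; lia.
    - destruct (Dval (n - m) 0 n) as [[? E]|[? E]]; try lia. rewrite E in Hs.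
      destruct (modcases (n - m + s) n) as [[? E']|[? E']]; try lia; rewrite E'.
      + exists (n - m + s). repeat split; lia.
      + exists (n - m + s - n). repeat split; lia. }
  destruct Hwt as [t [Ht [-> Htk]]].
  assert (Hkn : k < n) by lia.
  pose proof (lower V adj Hsym c C HC0 Hc k t q Hkn Ht Hq) as L. fold n in L.
  destruct (Dval k t n) as [[? E]|[? E]]; try lia; rewrite E in L;
  destruct (Dval t k n) as [[? E']|[? E']]; try lia; rewrite E' in L; lia.
Qed.
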